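(* Let $(J,\preccurlyeq)$ be a finite upper semilattice and $F\subseteq K_J$ a subfunctor of the constant functor. Then \[ \bigcup_{d\geq0}\mathrm{supp}(\beta^dF)\subseteq\langle\mathrm{supp}(\beta^0F)\rangle. \]
   Context: $K$ is a field and $\mathrm{vect}_K$ the category of finite-dimensional $K$-vector spaces; $K_J\colon J\to\mathrm{vect}_K$ is the constant functor with value $K$ and identity transition maps. For $a\in J$, $K(a,-)$ is the functor with $K(a,b)=K$ if $a\preccurlyeq b$ and $0$ otherwise, identity transition maps between nonzero values. Every functor $F\colon J\to\mathrm{vect}_K$ has a minimal projective resolution, unique up to isomorphism, whose $d$-th term is $\bigoplus_{a\in J}K(a,-)^{\beta^dF(a)}$; $\beta^dF\colon J\to\mathbb N$ is the $d$-th Betti diagram and $\mathrm{supp}(\beta^dF)=\{a\mid\beta^dF(a)\neq0\}$. An upper semilattice is a poset in which every nonempty subset has a join; for $S\subseteq J$, $\langle S\rangle:=\{\bigvee T\mid T\neq\varnothing,\ T\subseteq S\}$. *)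

(* Defs.v *)
From HB Require Import structures.
From mathcomp Require Import all_boot all_order all_algebra.
Set Implicit Arguments. Unset Strict Implicit. Unset Printing Implicit Defensive.
Import Order.Theory GRing.Theory.
Local Open Scope ring_scope.

(* A finite-dimensional vector
   space is K^n (row vectors); the transition map F(a <= b) is the matrix
   fmap a b acting on the right (v |-> v *m fmap a b).  For incomparable a b,
   fmap a b is irrelevant junk. *)
Record functor (K : fieldType) (d : Order.disp_t) (J : porderType d) := Functor {
  fdim : J -> nat;
  fmap : forall a b : J, 'M[K]_(fdim a, fdim b);
  fmap_id : forall a, fmap a a = 1%:M;
  fmap_comp : forall a b c, (a <= b)%O -> (b <= c)%O ->
     fmap a c = fmap a b *m fmap b c
}.

Record nat_trans (K : fieldType) (d : Order.disp_t) (J : porderType d)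
    (F G : functor K J) := NatTrans {
  nt : forall a : J, 'M[K]_(fdim F a, fdim G a);
  nt_nat : forall a b, (a <= b)%O -> fmap F a b *m nt b = nt a *m fmap G a b
}.

Definition const_functor (K : fieldType) (d : Order.disp_t) (J : porderType d)
  : functor K J.
Proof.
refine (@Functor K d J (fun _ => 1%N) (fun _ _ => 1%:M) (fun _ => erefl) _).
by move=> a b c _ _; rewrite mul1mx.
Defined.

(* F is isomorphic to the free functor (+)_{a in J} K(a,-)^{m a}:
   there are generators g a (the m a rows of g a, elements of F(a)) such
   that for every b, the images F(a <= b)(g a) for a <= b form a basis
   of F(b) (they span F(b) and their number is dim F(b)). *)
Definition free_with (K : fieldType) (d : Order.disp_t) (J : finPOrderType d)
    (P : functor K J) (m : J -> nat) : Prop :=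
  exists g : forall a : J, 'M[K]_(m a, fdim P a),
    forall b : J,
      (\sum_(a | (a <= b)%O) m a)%N = fdim P b /\
      (1%:M <= \sum_(a | (a <= b)%O) <<g a *m fmap P a b>>)%MS.

Definition rad (K : fieldType) (d : Order.disp_t) (J : finPOrderType d)
    (P : functor K J) (a : J) : 'M[K]_(fdim P a) :=
  (\sum_(b | (b < a)%O) <<fmap P b a>>)%MS.

(* A minimal projective resolution  ... -> P 1 -> P 0 -> F -> 0  of F, with
   P d = (+)_a K(a,-)^{mult d a}.  Minimality: every differential
   P (d+1) -> P d has image inside the radical of P d (equivalently each
   P d maps onto its image / onto F as a projective cover). *)
Record min_proj_res (K : fieldType) (d : Order.disp_t) (J : finPOrderType d)
    (F : functor K J) := MinProjRes {
  res_P : nat -> functor K J;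
  mult : nat -> J -> nat;
  res_free : forall n, free_with (res_P n) (mult n);
  res_eps : nat_trans (res_P 0) F;
  res_dif : forall n, nat_trans (res_P n.+1) (res_P n);
  res_eps_surj : forall a, row_full (nt res_eps a);
  res_exact0 : forall a, (nt (res_dif 0) a == kermx (nt res_eps a))%MS;
  res_exact : forall n a,
     (nt (res_dif n.+1) a == kermx (nt (res_dif n) a))%MS;
  res_minimal : forall n a, (nt (res_dif n) a <= rad (res_P n) a)%MS
}.

(* Betti diagram beta^n F = mult n and its support. *)
Definition betti_supp (K : fieldType) (d : Order.disp_t) (J : finPOrderType d)
    (F : functor K J) (R : min_proj_res F) (n : nat) : {set J} :=
  [set a | mult R n a != 0%N].

Definition is_join (d : Order.disp_t) (J : finPOrderType d) (T : {set J}) (j : J)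
  : bool :=
  [forall t in T, (t <= j)%O] &&
  [forall u, [forall t in T, (t <= u)%O] ==> (j <= u)%O].

Definition upper_semilattice (d : Order.disp_t) (J : finPOrderType d) : Prop :=
  forall T : {set J}, T != set0 -> exists j, is_join T j.

Definition join_closure (d : Order.disp_t) (J : finPOrderType d) (S : {set J})
  : {set J} :=
  [set j | [exists T : {set J}, [&& T != set0, T \subset S & is_join T j]]].

(* Main.v *)
Require Import Defs.
From HB Require Import structures.
From mathcomp Require Import all_boot all_order all_algebra zify.
Set Implicit Arguments. Unset Strict Implicit. Unset Printing Implicit Defensive.
Import Order.Theory GRing.Theory.
Local Open Scope ring_scope.

Lemma rank_sum_le (K : fieldType) (I : finType) (P : pred I) n (A_ : I -> 'M[K]_n) :
  (\rank (\sum_(i | P i) A_ i)%MS <= \sum_(i | P i) \rank (A_ i))%N.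
Proof.
apply: (big_ind2 (fun (M : 'M[K]_n) (k : nat) => \rank M <= k)%N).
- by rewrite mxrank0.
- move=> M1 k1 M2 k2 h1 h2.
  apply: leq_trans (leq_add h1 h2).
  exact: (mxrank_adds_leqif M1 M2).1.
- by [].
Qed.

Lemma rad_full (K : fieldType) (d : Order.disp_t) (J : finPOrderType d)
  (P : functor K J) m (freeP : free_with P m) a :
  (1%:M <= Defs.rad P a)%MS -> m a = 0%N.
Proof.
move=> H1.
case: freeP => g Hg.
have [Hdim _] := Hg a.
have Hr : (Defs.rad P a <= \sum_(c | (c < a)%O) <<g c *m fmap P c a>>)%MS.
  apply/sumsmx_subP => b Hb; rewrite genmxE.
  have [_ Hb'] := Hg b.
  have := submxMr (fmap P b a) Hb'.
  rewrite mul1mx => /submx_trans; apply.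
  rewrite sumsmxMr_gen; apply/sumsmx_subP => c Hc.
  have hg : (<<g c *m fmap P c b>> <= g c *m fmap P c b)%MS by rewrite genmxE.
  rewrite genmxE; apply: submx_trans (submxMr (fmap P b a) hg) _.
  rewrite -mulmxA -fmap_comp // ?(ltW Hb) //.
  by rewrite (sumsmx_sup c) ?genmxE // (le_lt_trans Hc Hb).
have Hrk := mxrankS (submx_trans H1 Hr).
rewrite mxrank1 in Hrk.
have Hrk2 := leq_trans Hrk (rank_sum_le _ _).
have Hrk3 : (\sum_(c | (c < a)%O) \rank (<<g c *m fmap P c a>>) <= \sum_(c | (c < a)%O) m c)%N.
  apply: leq_sum => c _; rewrite genmxE.
  exact: leq_trans (mxrankM_maxl _ _) (rank_leq_row _).
have Hs : (\sum_(c | (c <= a)%O) m c = m a + \sum_(c | (c < a)%O) m c)%N.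
  rewrite (bigD1 a) //=; congr addn; apply: eq_bigl => c.
  by rewrite lt_neqAle andbC.
have := leq_trans Hrk2 Hrk3.
rewrite -Hdim Hs. lia.
Qed.

Lemma step (K : fieldType) (d : Order.disp_t) (J : finPOrderType d)
  (P' P Q T : functor K J) (d' : nat_trans P' P) (dd : nat_trans P Q)
  (e : nat_trans Q T) m
  (exQ : forall x, (nt dd x == kermx (nt e x))%MS)
  (exP : forall x, (nt d' x == kermx (nt dd x))%MS)
  (minP : forall x, (nt d' x <= Defs.rad P x)%MS)
  (freeP : free_with P m) a
  (H : fdim Q a = 0%N \/ exists2 j, (j < a)%O &
        row_full (fmap Q j a) && row_free (fmap T j a)) : m a = 0%N.
Proof.
apply: (rad_full freeP).
have Hker : forall k (w : 'M_(k, fdim P a)), w *m nt dd a = 0 -> (w <= Defs.rad P a)%MS.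
  move=> k w /sub_kermxP hw.
  have /andP[_ h2] := exP a.
  exact: submx_trans (submx_trans hw h2) (minP a).
case: H => [H0 | [j Hja /andP[HQ HT]]].
  apply: Hker; apply/eqP; rewrite -mxrank_eq0 -leqn0.
  by apply: leq_trans (rank_leq_col _) _; rewrite H0.
set D := nt dd a.
have HD0 : D *m nt e a = 0.
  apply/sub_kermxP; have /andP[h1 _] := exQ a; exact: h1.
have [X HX] : exists X, D = X *m fmap Q j a.
  apply/submxP; rewrite -sub1mx in HQ; exact: submx_trans (submx1 _) HQ.
have HXe : X *m nt e j = 0.
  apply/eqP; rewrite -(mulmx_free_eq0 _ HT) -mulmxA -(nt_nat e (ltW Hja)).
  by rewrite mulmxA -HX HD0.
have [Y HY] : exists Y, X = Y *m nt dd j.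
  apply/submxP; have /andP[_ h2] := exQ j.
  by apply: submx_trans h2; apply/sub_kermxP.
have HDY : D = Y *m fmap P j a *m D.
  by rewrite {1}HX HY -!mulmxA -(nt_nat dd (ltW Hja)).
have -> : (1%:M : 'M_(fdim P a)) = (1%:M - Y *m fmap P j a) + Y *m fmap P j a.
  by rewrite subrK.
apply: addmx_sub.
  apply: Hker; rewrite mulmxBl mul1mx -/D -HDY.
  by rewrite subrr.
apply: submx_trans (submxMl _ _) _.
by rewrite /Defs.rad (sumsmx_sup j) // genmxE.
Qed.

Section Gen.
Variables (K : fieldType) (d : Order.disp_t) (J : finPOrderType d) (S : {set J}).


Lemma gen_key (m : J -> nat) (Hm : forall b, b \notin join_closure S -> m b = 0%N)
  (a c : J) : m c != 0%N -> (c <= a)%O ->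
  exists2 T : {set J}, T != set0 & (T \subset [set s in S | (s <= a)%O]) && is_join T c.
Proof.
move=> Hc Hca.
have : c \in join_closure S by apply: contraR Hc => /Hm ->.
rewrite inE => /existsP[T /and3P[HT0 HTS HTj]].
exists T => //; rewrite HTj andbT.
apply/subsetP => t Ht; rewrite inE (subsetP HTS) //=.
move/andP: HTj => [/forallP Hup _].
exact: le_trans (implyP (Hup t) Ht) Hca.
Qed.

Lemma gen_le (m : J -> nat) (Hm : forall b, b \notin join_closure S -> m b = 0%N)
  (a j : J) (Hj : is_join [set s in S | (s <= a)%O] j) (c : J) :
  m c != 0%N -> (c <= a)%O -> (c <= j)%O.
Proof.
move=> Hc Hca; have [T _ /andP[HTS HTj]] := gen_key Hm Hc Hca.
move/andP: HTj => [_ /forallP Hl].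
apply: (implyP (Hl j)); apply/forallP => t; apply/implyP => Ht.
move/andP: Hj => [/forallP Hu _].
exact: (implyP (Hu t)) (subsetP HTS t Ht).
Qed.

Lemma gen_none (m : J -> nat) (Hm : forall b, b \notin join_closure S -> m b = 0%N)
  (a : J) (H0 : [set s in S | (s <= a)%O] = set0) (c : J) :
  (c <= a)%O -> m c = 0%N.
Proof.
move=> Hca; apply/eqP; apply: contraT => Hc.
have [T HT0 /andP[HTS _]] := gen_key Hm Hc Hca.
move: HTS; rewrite H0 subset0 => /eqP HT; by rewrite HT eqxx in HT0.
Qed.

Lemma gen_dim0 (P : functor K J) m (freeP : free_with P m)
  (Hm : forall b, b \notin join_closure S -> m b = 0%N)
  (a : J) (H0 : [set s in S | (s <= a)%O] = set0) : fdim P a = 0%N.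
Proof.
case: freeP => g Hg; have [Hd _] := Hg a; rewrite -Hd.
by apply: big1 => c Hc; apply: (gen_none Hm H0).
Qed.

Lemma gen_ne (P : functor K J) m (freeP : free_with P m)
  (Hm : forall b, b \notin join_closure S -> m b = 0%N)
  (a : J) (Ha : a \notin join_closure S) (j : J) (Hj : is_join [set s in S | (s <= a)%O] j)
  (Hne : [set s in S | (s <= a)%O] != set0) :
  [/\ (j < a)%O, row_full (fmap P j a) & fdim P a = fdim P j].
Proof.
have Hja : (j <= a)%O.
  move/andP: Hj => [_ /forallP Hl]; apply: (implyP (Hl a)).
  by apply/forallP => t; apply/implyP; rewrite inE => /andP[].
have HjC : j \in join_closure S.
  rewrite inE; apply/existsP; exists [set s in S | (s <= a)%O].
  rewrite Hne Hj andbT; apply/subsetP => t; rewrite inE => /andP[] //.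
case: freeP => g Hg.
split.
- rewrite lt_neqAle Hja andbT; apply: contraNneq Ha => <-; exact: HjC.
- rewrite -sub1mx; have [_ Hs] := Hg a; apply: submx_trans Hs _.
  apply/sumsmx_subP => c Hca; rewrite genmxE.
  have [Hc0 | Hc] := eqVneq (m c) 0%N.
    have : \rank (g c *m fmap P c a) == 0%N.
      by rewrite -leqn0 -Hc0; exact: leq_trans (mxrankM_maxl _ _) (rank_leq_row _).
    by rewrite mxrank_eq0 => /eqP ->; rewrite sub0mx.
  have Hcj := gen_le Hm Hj Hc Hca.
  by rewrite (fmap_comp P Hcj Hja) mulmxA submxMl.
- have [Hd1 _] := Hg a; have [Hd2 _] := Hg j; rewrite -Hd1 -Hd2.
  rewrite big_mkcond [RHS]big_mkcond /=; apply: eq_bigr => c _.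
  have [Hcj | Hcj] := boolP (c <= j)%O; first by rewrite (le_trans Hcj Hja).
  case: ifP => // Hca; apply/eqP; move: Hcj; apply: contraNT => Hc.
  by apply: (gen_le Hm Hj Hc); rewrite Hca.
Qed.
End Gen.

Lemma next (K : fieldType) (d : Order.disp_t) (J : finPOrderType d) (S : {set J})
  (HJ : upper_semilattice J)
  (P' P Q T : functor K J) (d' : nat_trans P' P) (dd : nat_trans P Q)
  (e : nat_trans Q T) m mQ
  (exQ : forall x, (nt dd x == kermx (nt e x))%MS)
  (exP : forall x, (nt d' x == kermx (nt dd x))%MS)
  (minP : forall x, (nt d' x <= Defs.rad P x)%MS)
  (freeP : free_with P m) (freeQ : free_with Q mQ)
  (HmQ : forall b, b \notin join_closure S -> mQ b = 0%N)
  (HT : forall a j, a \notin join_closure S -> is_join [set s in S | (s <= a)%O] j ->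
      [set s in S | (s <= a)%O] != set0 -> row_free (fmap T j a)) :
  forall a, a \notin join_closure S -> m a = 0%N.
Proof.
move=> a Ha; apply: (step exQ exP minP freeP).
have [H0 | H0] := eqVneq [set s in S | (s <= a)%O] set0.
  by left; exact: (@gen_dim0 K d J S Q mQ freeQ HmQ a H0).
have [j Hj] := HJ _ H0.
have [Hja Hfull _] := gen_ne freeQ HmQ Ha Hj H0.
by right; exists j => //; rewrite Hfull (HT a j).
Qed.

Lemma row_free_mulL (K : fieldType) m n p (A : 'M[K]_(m, n)) (B : 'M_(n, p)) :
  row_free (A *m B) -> row_free A.
Proof.
rewrite /row_free => /eqP H; rewrite eqn_leq rank_leq_row /=.
by rewrite -{1}H mxrankM_maxl.
Qed.

Local Close Scope ring_scope.

Theorem corollary4p9 (K : fieldType) (d : Order.disp_t) (J : finPOrderType d)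
    (HJ : upper_semilattice J)
    (F : functor K J) (iota : nat_trans F (const_functor K J))
    (Hsub : forall a, row_free (nt iota a))
    (R : min_proj_res F) :
  forall n : nat, betti_supp R n \subset join_closure (betti_supp R 0).
Proof.
set S := betti_supp R 0.
have G0 : forall b, b \notin join_closure S -> mult R 0 b = 0%N.
  move=> b Hb; apply/eqP; move: Hb; apply: contraNT => Hm.
  have HbS : b \in S by rewrite inE.
  rewrite inE; apply/existsP; exists [set b].
  have -> : [set b] != set0 by apply/set0Pn; exists b; rewrite inE.
  rewrite sub1set HbS /=; apply/andP; split.
    by apply/forallP => t; apply/implyP; rewrite inE => /eqP ->.
  apply/forallP => u; apply/implyP => /forallP Hu.
  by apply: (implyP (Hu b)); rewrite inE.
have G1 : forall b, b \notin join_closure S -> mult R 1 b = 0%N.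
  apply: (next HJ (res_exact0 R) (res_exact R 0) (res_minimal R 1)
            (res_free R 1) (res_free R 0) G0).
  move=> a j Ha Hj Hne.
  apply: (@row_free_mulL _ _ _ _ _ (nt iota a)).
  rewrite (nt_nat iota) /=; first by rewrite mulmx1.
  by have [/ltW] := gen_ne (res_free R 0) G0 Ha Hj Hne.
have G : forall n, (forall b, b \notin join_closure S -> mult R n b = 0%N) /\
                   (forall b, b \notin join_closure S -> mult R n.+1 b = 0%N).
  elim=> [|n [IH1 IH2]]; first by split.
  split => //.
  apply: (next HJ (res_exact R n) (res_exact R n.+1) (res_minimal R n.+2)
            (res_free R n.+2) (res_free R n.+1) IH2).
  move=> a j Ha Hj Hne.
  have [_ Hfull Hdim] := gen_ne (res_free R n) IH1 Ha Hj Hne.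
  by rewrite /row_free (eqP Hfull) Hdim.
move=> n; apply/subsetP => b; apply: contraTT => Hb.
by rewrite inE negbK; apply/eqP; exact: (proj1 (G n) b Hb).
Qed.
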